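(* $$\sum_{k=1}^\infty\frac{18675k^2+7627k+670}{(4k+1)(-8)^k\binom{4k}k}=-30-192\log2.$$ *)

(* Defs.v *)
From Stdlib Require Import Reals.
From Coquelicot Require Import Coquelicot.
Open Scope R_scope.

Definition summand (k : nat) : R :=
  (18675 * INR k ^ 2 + 7627 * INR k + 670) /
  ((4 * INR k + 1) * (-8) ^ k * Binomial.C (4 * k) k).

(* Main.v *)
Require Import Defs.
From Stdlib Require Import Reals.
From Coquelicot Require Import Coquelicot.
Open Scope R_scope.
From Stdlib Require Import Lra Psatz Lia Factorial.
Definition tt (x : R) : R := - (x * (1 - x) ^ 3) / 8.
Definition PP (m : R) : R := 18675 * m ^ 2 + 7627 * m + 670.
Definition rr (N : nat) (x : R) : R :=
  tt x ^ (S N) * (PP (INR N + 1) / (1 - tt x)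
    + (37350 * (INR N + 1) + 26302) * tt x / (1 - tt x) ^ 2
    + 37350 * tt x ^ 2 / (1 - tt x) ^ 3).
Definition Apol (x : R) : R :=
  -288000 - 60096*x + 101620*x^2 + 22826*x^3 - 148680*x^4 + 117614*x^5
  - 48940*x^6 + 14406*x^7 - 670*x^9.
Definition Dpol (x : R) : R := 8 + x * (1 - x) ^ 3.
Definition Qpol (x : R) : R := 8 - 7*x + 4*x^2 - x^3.
Definition GG (x : R) : R := Apol x / Dpol x ^ 2 - 144 * ln (x + 1) + 48 * ln (Qpol x).

Lemma Q_pos x : 0 <= x <= 1 -> 0 < Qpol x.
Proof. intros. unfold Qpol. nra. Qed.
Lemma D_pos x : 0 <= x <= 1 -> 0 < Dpol x.
Proof. intros. unfold Dpol. assert (0 <= 1 - x) by lra. assert (0 <= (1-x)^3) by (apply pow_le; lra). nra. Qed.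

Lemma GG_deriv x : 0 <= x <= 1 -> is_derive GG x (rr 0 x).
Proof.
  intros Hx. pose proof (Q_pos x Hx). pose proof (D_pos x Hx).
  unfold GG, Apol, Dpol, Qpol in *.
  auto_derive.
  - repeat split; try lra; nra.
  - unfold rr, tt, PP. simpl INR. field; repeat split; try lra; nra.
Qed.

Lemma rr_cont N x : 0 <= x <= 1 -> continuous (rr N) x.
Proof.
  intros Hx. apply (ex_derive_continuous (K:=R_AbsRing) (rr N)). unfold rr, tt.
  assert (0 <= (1 - x)^3) by (apply pow_le; lra).
  auto_derive.
  match goal with |- ?y <> 0 /\ _ => assert (Hy : 1 <= y); [replace y with (1 + x*(1-x)^3/8) by (simpl; field); nra|] end.
  repeat split; try apply Rgt_not_eq; try nra.
Qed.

Lemma main_int : is_RInt (rr 0) 0 1 (-30 - 192 * ln 2).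
Proof.
  replace (-30 - 192 * ln 2) with (minus (GG 1) (GG 0)).
  - apply (is_RInt_derive (V:=R_CompleteNormedModule) GG).
    + intros x Hx. rewrite Rmin_left in Hx by lra. rewrite Rmax_right in Hx by lra.
      now apply GG_deriv.
    + intros x Hx. rewrite Rmin_left in Hx by lra. rewrite Rmax_right in Hx by lra.
      now apply rr_cont.
  - unfold minus, plus, opp; simpl. unfold GG, Apol, Dpol, Qpol.
    replace (1+1) with 2 by ring. replace (0+1) with 1 by ring.
    replace (8 - 7 * 1 + 4 * 1 ^ 2 - 1 ^ 3) with (2*2) by ring.
    replace (8 - 7 * 0 + 4 * 0 ^ 2 - 0 ^ 3) with (2*(2*2)) by ring.
    rewrite !ln_mult by lra. rewrite ln_1. field.
Qed.

Lemma cont_of_deriv (f : R -> R) x : ex_derive f x -> continuous f x.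
Proof. apply (ex_derive_continuous (K:=R_AbsRing) (V:=R_NormedModule)). Qed.

Lemma is_RInt_val (f : R -> R) a b (l l' : R) : l = l' -> is_RInt f a b l -> is_RInt f a b l'.
Proof. intros ->; auto. Qed.

Lemma beta a : forall b, is_RInt (fun x => x^a * (1-x)^b) 0 1
   (INR (fact a) * INR (fact b) / INR (fact (a+b+1))).
Proof.
  induction a as [|a IH]; intros b.
  - assert (Hd := is_RInt_derive (V:=R_CompleteNormedModule)
       (fun x => - (1-x)^(S b) / (INR b + 1)) (fun x => x^0 * (1-x)^b) 0 1).
    pose proof (pos_INR b).
    replace (INR (fact 0) * INR (fact b) / INR (fact (0 + b + 1))) with
      (minus (- (1-1)^(S b) / (INR b + 1)) (- (1-0)^(S b) / (INR b + 1))).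
    + apply Hd.
      * intros x _. auto_derive. { lra. }
        change (match b with 0%nat => 1 | S _ => INR b + 1 end) with (INR (S b)). rewrite S_INR. replace (1 + - x) with (1 - x) by ring. simpl pow. field. lra.
      * intros x _. apply (ex_derive_continuous (K:=R_AbsRing) (fun x => x^0 * (1-x)^b)).
        auto_derive. auto.
    + replace (1-1) with 0 by ring. replace (1-0) with 1 by ring.
      rewrite pow1, pow_i by lia.
      unfold minus, plus, opp; simpl.
      replace (b+1)%nat with (S b) by lia. rewrite fact_simpl, mult_INR.
      rewrite S_INR. simpl. field.
      pose proof (INR_fact_neq_0 b); split; lra.
  - pose proof (pos_INR a) as Pa; pose proof (pos_INR b) as Pb.
    assert (Hd := is_RInt_derive (V:=R_CompleteNormedModule)
      (fun x => x * x^a * ((1-x) * (1-x)^b))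
      (fun x => (INR a + 1) * (x^a * (1-x)^(S b)) - (INR b + 1) * (x^(S a) * (1-x)^b)) 0 1).
    assert (H0 : is_RInt (fun x => (INR a + 1) * (x^a * (1-x)^(S b)) - (INR b + 1) * (x^(S a) * (1-x)^b)) 0 1 0).
    { eapply is_RInt_val; [|apply Hd].
      - unfold minus, plus, opp; simpl. ring.
      - intros x _. auto_derive; auto.
          destruct a; destruct b; cbn [Init.Nat.pred pow]; rewrite ?S_INR; cbn [INR]; match goal with |- ?u = ?v => change (@eq R u v) end; change (1 + - x) with (1 - x); ring.
      - intros x _. apply cont_of_deriv. auto_derive. auto. }
    assert (H1 := is_RInt_minus _ _ 0 1 _ _ (is_RInt_scal _ 0 1 (INR a + 1) _ (IH (S b))) H0).
    assert (H2 := is_RInt_scal _ 0 1 (/(INR b + 1)) _ H1).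
    eapply is_RInt_ext in H2.
    + replace (INR (fact (S a)) * INR (fact b) / INR (fact (S a + b + 1))) with
         (scal (/ (INR b + 1)) (minus (scal (INR a + 1) (INR (fact a) * INR (fact (S b)) / INR (fact (a + S b + 1)))) 0)).
      * exact H2.
      * replace (a + S b + 1)%nat with (S a + b + 1)%nat by lia.
        rewrite (fact_simpl a), (fact_simpl b), !mult_INR, !S_INR.
        pose proof (INR_fact_neq_0 (S a + b + 1)) as HF.
        revert HF. generalize (INR (fact (S a + b + 1))); intros F HF.
        unfold scal, minus, plus, opp; simpl; unfold mult; simpl.
        field. split; lra.
    + intros x _. unfold scal, minus, plus, opp; simpl; unfold mult; simpl.
      field. lra.
Qed.

Lemma summand_int k : is_RInt (fun x => PP (INR k) * tt x ^ k) 0 1 (summand k).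
Proof.
  assert (H := is_RInt_scal _ 0 1 (PP (INR k) * (-1/8)^k) _ (beta k (3*k))).
  eapply is_RInt_ext in H.
  - eapply is_RInt_val; [|exact H].
    unfold summand, Binomial.C, PP. change (scal ?a ?b) with (a * b).
    replace (4 * k - k)%nat with (3 * k)%nat by lia.
    replace (k + 3 * k + 1)%nat with (S (4 * k)) by lia.
    rewrite fact_simpl, mult_INR, S_INR, mult_INR.
    replace (INR 4) with 4 by (simpl; ring).
    pose proof (INR_fact_neq_0 k). pose proof (INR_fact_neq_0 (3*k)).
    pose proof (INR_fact_neq_0 (4*k)). pose proof (pos_INR k).
    assert (E : (-1/8)^k * (-8)^k = 1).
    { rewrite <- Rpow_mult_distr. replace (-1/8 * -8) with 1 by field. apply pow1. }
    assert (Hu: (-1/8)^k <> 0) by (apply pow_nonzero; lra).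
    replace ((-8)^k) with (/ (-1/8)^k) by (apply (Rmult_eq_reg_l ((-1/8)^k)); [rewrite E; field; exact Hu | exact Hu]).
    field. repeat split; lra.
  - intros x _. change (scal ?a ?b) with (a * b). unfold tt.
    rewrite pow_mult.
    replace (- (x * (1 - x) ^ 3) / 8) with ((-1/8) * (x * (1-x)^3)) by field.
    rewrite !Rpow_mult_distr. match goal with |- ?u = ?v => change (@eq R u v) end. ring.
Qed.

Lemma tt_bound x : 0 <= x <= 1 -> -1/32 <= tt x <= 0.
Proof.
  intros Hx. unfold tt.
  assert (0 <= 1 - x <= 1) by lra.
  assert (0 <= (1-x)^2 <= 1) by (split; [apply pow_le; lra| simpl; nra]).
  assert (0 <= x * (1-x) <= 1/4). { split. apply Rmult_le_pos; lra. pose proof (pow2_ge_0 (x - 1/2)). simpl in *. lra. }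
  replace (x * (1-x)^3) with ((x * (1-x)) * (1-x)^2) by ring.
  set (a := x * (1-x)) in *. set (b := (1-x)^2) in *.
  split; nra.
Qed.

Lemma rr_step N x : 0 <= x <= 1 ->
  rr N x - rr (S N) x = PP (INR (S N)) * tt x ^ (S N).
Proof.
  intros Hx. pose proof (tt_bound x Hx). unfold rr. rewrite !S_INR.
  set (T := tt x) in *. assert (1 - T <> 0) by lra.
  change (T ^ S (S N)) with (T * T ^ S N). unfold PP. field. auto.
Qed.

Lemma psum N x : 0 <= x <= 1 ->
  sum_n (fun n => PP (INR (S n)) * tt x ^ (S n)) N = rr 0 x - rr (S N) x.
Proof.
  intros Hx. induction N as [|N IH].
  - rewrite sum_O. rewrite (rr_step 0 x Hx). reflexivity.
  - rewrite sum_Sn, IH. rewrite <- (rr_step (S N) x Hx).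
    unfold plus; simpl. ring.
Qed.

Lemma psum_int N : is_RInt (fun x => sum_n (fun n => PP (INR (S n)) * tt x ^ (S n)) N) 0 1
   (sum_n (fun n => summand (S n)) N).
Proof.
  induction N as [|N IH].
  - rewrite sum_O. eapply is_RInt_ext; [|apply summand_int].
    intros x _. rewrite sum_O. reflexivity.
  - rewrite sum_Sn. eapply is_RInt_ext; [|apply (is_RInt_plus _ _ _ _ _ _ IH (summand_int (S (S N))))].
    intros x _. rewrite sum_Sn. reflexivity.
Qed.

Lemma pow2_ge N : INR N + 1 <= 2 ^ N.
Proof.
  induction N as [|N IH]. - simpl; lra.
  - rewrite S_INR. simpl. assert (1 <= 2^N) by (apply pow_R1_Rle; lra). lra.
Qed.

Lemma rr_bound N x : 0 <= x <= 1 -> Rabs (rr (S N) x) <= 250000 * (1/8)^N.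
Proof.
  intros Hx. pose proof (tt_bound x Hx) as HT. unfold rr.
  set (T := tt x) in *.
  set (w := / (1 - T)).
  assert (Hw : 0 < w <= 1).
  { unfold w. split. apply Rinv_0_lt_compat; lra.
    rewrite <- Rinv_1. apply Rinv_le_contravar; lra. }
  assert (HT1 : Rabs T <= 1/32) by (apply Rabs_le; lra).
  pose proof (pos_INR (S N)) as HN.
  set (n := INR (S N)) in *.
  set (al := PP (n + 1)). set (be := 37350 * (n + 1) + 26302).
  assert (Hal : 0 <= al) by (unfold al, PP; nra).
  assert (Hbe : 0 <= be) by (unfold be; lra).
  assert (E : al / (1 - T) + be * T / (1 - T) ^ 2 + 37350 * T ^ 2 / (1 - T) ^ 3
            = al * w + be * T * w^2 + 37350 * T^2 * w^3).
  { unfold w. field. lra. }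
  rewrite E, Rabs_mult, <- RPow_abs.
  assert (HB : Rabs (al * w + be * T * w ^ 2 + 37350 * T ^ 2 * w ^ 3) <= al + be + 37350).
  { assert (0 <= T^2 <= 1) by (simpl; split; nra).
    assert (0 < w^2 <= 1) by (simpl; split; nra).
    assert (0 < w^3 <= 1) by (simpl; split; nra).
    set (w2 := w^2) in *. set (w3 := w^3) in *. set (T2 := T^2) in *.
    assert (0 <= al * w <= al) by (split; nra).
    assert (-1 <= T * w2 <= 0) by (split; nra).
    assert (-be <= be * (T * w2) <= 0) by (split; nra).
    assert (0 <= T2 * w3 <= 1) by (split; nra).
    assert (0 <= 37350 * (T2 * w3) <= 37350) by (split; nra).
    apply Rabs_le. split; nra. }
  assert (HP : Rabs T ^ S (S N) <= (1/32)^N * (1/32)^2).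
  { rewrite <- pow_add. replace (N + 2)%nat with (S (S N)) by lia.
    apply pow_incr. split; [apply Rabs_pos|lra]. }
  assert (HC : al + be + 37350 <= 250000 * 1024 * (INR N + 1)^2).
  { unfold al, be, PP, n. rewrite S_INR. pose proof (pos_INR N). simpl. nra. }
  pose proof (pow2_ge N) as H2.
  assert (H4 : (INR N + 1)^2 <= 4^N).
  { replace 4 with (2^2) by ring. rewrite <- pow_mult. rewrite Nat.mul_comm, pow_mult.
    apply pow_incr. pose proof (pos_INR N). lra. }
  assert (E8 : (1/32)^N * 4^N = (1/8)^N).
  { rewrite <- Rpow_mult_distr. f_equal. field. }
  assert (Hp0 : 0 <= (1/32)^N) by (apply pow_le; lra).
  assert (Habs0 : 0 <= Rabs T ^ S (S N)) by (apply pow_le; apply Rabs_pos).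
  eapply Rle_trans.
  { apply Rmult_le_compat; [exact Habs0 | apply Rabs_pos | exact HP | exact HB]. }
  rewrite <- E8.
  assert (0 <= (INR N + 1)^2) by (apply pow_le; pose proof (pos_INR N); lra).
  assert ((1/32)^N * (INR N + 1)^2 <= (1/32)^N * 4^N) by (apply Rmult_le_compat_l; lra).
  replace ((1/32)^2) with (/1024) by field.
  set (q := (1/32)^N) in *. set (m := (INR N + 1)^2) in *. nra.
Qed.

Theorem lemma3p1 :
  is_series (fun n : nat => summand (S n)) (-30 - 192 * ln 2).
Proof.
  set (L := -30 - 192 * ln 2).
  set (s := sum_n (fun n => summand (S n))).
  assert (HR : forall N, is_RInt (rr (S N)) 0 1 (minus L (s N))).
  { intro N. eapply is_RInt_ext; [| apply (is_RInt_minus _ _ _ _ _ _ main_int (psum_int N))].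
    intros x Hx. rewrite Rmin_left, Rmax_right in Hx by lra. cbv beta.
    rewrite psum by lra. unfold minus, plus, opp; simpl.
    match goal with |- ?u = ?v => change (@eq R u v) end. ring. }
  assert (HB : forall N, Rabs (L - s N) <= 250000 * (1/8)^N).
  { intro N. pose proof (norm_RInt_le_const (rr (S N)) 0 1 _ (250000 * (1/8)^N) ltac:(lra)
       (fun x Hx => rr_bound N x Hx) (HR N)) as H.
    change (Rabs (minus L (s N)) <= (1 - 0) * (250000 * (1 / 8) ^ N)) in H.
    unfold minus, plus, opp in H; simpl in H. unfold Rminus in *. lra. }
  assert (Hg : is_lim_seq (fun N => 250000 * (1/8)^N) 0).
  { replace (Finite 0) with (Rbar_mult 250000 0) by (simpl; f_equal; ring).
    apply is_lim_seq_scal_l. apply is_lim_seq_geom. rewrite Rabs_pos_eq; lra. }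
  assert (Hl : is_lim_seq s L).
  { apply is_lim_seq_le_le with (u := fun N => L - 250000 * (1/8)^N) (w := fun N => L + 250000 * (1/8)^N).
    - intro N. specialize (HB N). apply Rabs_le_between in HB. lra.
    - replace (Finite L) with (Rbar_minus L 0) by (simpl; f_equal; ring).
      apply is_lim_seq_minus'. apply is_lim_seq_const. exact Hg.
    - replace (Finite L) with (Rbar_plus L 0) by (simpl; f_equal; ring).
      apply is_lim_seq_plus'. apply is_lim_seq_const. exact Hg. }
  exact Hl.
Qed.
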